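(* Let $N\ge0$ be an integer and $s,t,S$ be numbers with $s-S\in\mathbb{Z}$. Define, for $T\in t+\mathbb{Z}$, $$R^{(s,t)}_{(S,T)}(N)=\frac{(-1)^{t-T+N}N!}{(s-S+N)!\,(t-T+N)!\,(S-s+T-t-N)!},$$ with the convention that it is $0$ if any factorial argument is negative. Then $$\sum_{T\in t+\mathbb{Z}}R^{(s,t)}_{(S,T)}(N)=\delta_{s,S}.$$ *)

(* Defs.v *)
From mathcomp Require Import all_boot all_order all_algebra.
Set Implicit Arguments. Unset Strict Implicit. Unset Printing Implicit Defensive.
Import Order.TTheory GRing.Theory Num.Theory.
Local Open Scope ring_scope.

(* Factorial of an integer argument, as a field element; only used for
   nonnegative arguments (the convention "0 if any argument is negative"
   is handled in [Rcoef]). *)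
Definition zfact (K : fieldType) (x : int) : K := ((`|x|%N)`!)%:R.

(* R^{(s,t)}_{(S,T)}(N), expressed through the integer differences
   a = s - S and b = t - T:
     (-1)^(b+N) N! / ((a+N)! (b+N)! (-a-b-N)!),
   and 0 if one of a+N, b+N, -a-b-N is negative. *)
Definition Rcoef (K : fieldType) (a b : int) (N : nat) : K :=
  let x := a + N%:Z in
  let y := b + N%:Z in
  let z := - a - b - N%:Z in
  if [&& 0 <= x, 0 <= y & 0 <= z] then
    (-1) ^+ (`|y|%N) * (N`!)%:R / (zfact K x * zfact K y * zfact K z)
  else 0.

Definition is_fsum (K : fieldType) (f : int -> K) (l : K) : Prop :=
  exists M : nat,
    (forall m : int, (M%:Z < `|m|)%R -> f m = 0) /\
    \sum_(0 <= i < (M + M).+1) f (i%:Z - M%:Z) = l.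

(* Main.v *)
Require Import Defs.
From mathcomp Require Import all_boot all_order all_algebra.
From mathcomp Require Import zify ring.
Import Order.TTheory GRing.Theory Num.Theory.
Local Open Scope ring_scope.

Lemma fact_neq0 (K : numFieldType) (n : nat) : (n`!)%:R != 0 :> K.
Proof. by rewrite pnatr_eq0 -lt0n fact_gt0. Qed.

Theorem mainTheorem11 (K : numFieldType) (N : nat) (s t S : K) (k : int)
    (hk : s - S = k%:~R) :
  is_fsum (fun m : int => Rcoef K k (- m) N)
          ((s == S)%:R).
Proof.
have hsS : (s == S) = (k == 0) by rewrite -subr_eq0 hk intr_eq0.
rewrite hsS.
exists (N + `|k|)%N; split.
  move=> m hm; rewrite /Rcoef; case: ifP => // /and3P [h1 h2 h3].
  exfalso; move: hm h1 h2 h3; lia.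
have [hgood|hbad] := boolP ((- N%:Z <= k) && (k <= 0)); last first.
  have -> : (k == 0) = false by apply/negbTE; apply: contra hbad => /eqP ->; lia.
  rewrite big1 // => i _; rewrite /Rcoef; case: ifP => // /and3P [h1 h2 h3].
  exfalso; move: hbad h1 h2 h3; rewrite negb_and; lia.
set n := `|k|%N.
have kE : k = - n%:Z by rewrite /n; lia.
have nN : (n <= N)%N by rewrite /n; lia.
set M := (N + n)%N.
pose c : K := N`!%:R / ((N - n)`!%:R * n`!%:R).
pose g (i : nat) : K := if (n <= i <= n + n)%N then
   (-1) ^+ (i - n) * N`!%:R / ((N - n)`!%:R * (i - n)`!%:R * (n + n - i)`!%:R)
   else 0.
rewrite big_nat_rev /=.
rewrite (eq_big_nat _ _ (F2 := g)); last first.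
  move=> i /andP [_ hi]; rewrite /g /Rcoef /zfact.
  case: ifP => H1; case: ifP => H2.
  - congr (_ ^+ _ * _ / (_ * _ * _)).
    + lia.
    + congr ((_`!)%:R); lia.
    + congr ((_`!)%:R); lia.
    + congr ((_`!)%:R); lia.
  - exfalso; move/negbT: H2; move/and3P: H1 => [h1 h2 h3]; rewrite kE in h1 h2 h3 *.
    rewrite !negb_and; lia.
  - exfalso; move/negbT: H1; move/andP: H2 => [h1 h2].
    rewrite kE !negb_and; lia.
  - by [].
rewrite (big_cat_nat _ (n := n)) //=; last by rewrite /M; lia.
rewrite big_nat_cond big1 ?add0r; last first.
  by move=> i /andP [/andP [_ hi] _]; rewrite /g; case: ifP => // H; exfalso; lia.
rewrite (big_cat_nat _ (n := (n + n).+1)) //=; [|lia|rewrite /M; lia].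
rewrite [X in _ + X]big_nat_cond [X in _ + X]big1 ?addr0; last first.
  by move=> i /andP [/andP [hi _] _]; rewrite /g; case: ifP => // H; exfalso; lia.
rewrite -{1}(add0n n) big_addn.
have -> : ((n + n).+1 - n)%N = n.+1 by lia.
rewrite (eq_big_nat _ _ (F2 := fun i => c * ((-1) ^+ i *+ 'C(n, i)))); last first.
  move=> i /andP [_ hi]; rewrite /g.
  have -> : (n <= i + n <= n + n)%N by lia.
  have -> : (i + n - n)%N = i by lia.
  have -> : (n + n - (i + n))%N = (n - i)%N by lia.
  rewrite /c -mulr_natr -(bin_fact (_ : i <= n)%N); last by lia.
  rewrite !natrM.
  have := fact_neq0 K i; have := fact_neq0 K (n - i); have := fact_neq0 K (N - n).
  move=> h1 h2 h3.
  field.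
  by rewrite h1 h2 h3 pnatr_eq0 -lt0n bin_gt0; lia.
rewrite big_mkord -mulr_sumr.
have := exprDn (1 : K) (-1) n.
under eq_bigr do rewrite expr1n mul1r.
move=> <-; rewrite subrr expr0n.
have -> : (n == 0%N) = (k == 0) by rewrite /n; apply/idP/idP; lia.
case: eqP => [k0|_]; last by rewrite mulr0.
have n0 : n = 0%N by rewrite /n k0.
rewrite mulr1 /c n0 subn0.
by rewrite fact0 mulr1 divff // fact_neq0.
Qed.
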